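(* If a vertical line $\Gamma$ sweeps from left to right, the only values of $x(\Gamma)$ at which the shadow of $\mathrm{OPT}$ at $\Gamma$ changes are $x$-coordinates of reflection points of $\mathrm{OPT}$. In particular, any subpath of $\mathrm{OPT}$ that does not contain a reflection point (as an interior point) has shadow $1$ throughout its length.
   Context: Instance: vertical line segments $s_1,\dots,s_n$ in $\mathbb{R}^2$, each of length $1$, with pairwise distinct $x$-coordinates. A tour is a cyclic sequence of points $p_1,\dots,p_\sigma$, each on some segment, with every segment containing at least one $p_j$; the straight segments joining consecutive points are legs. $\mathrm{OPT}$ is a fixed minimum-cost tour, oriented $p_1\to p_2\to\cdots$, with no two consecutive points on the same segment (no vertical legs) and not self-crossing. For a point $p_j$ of $\mathrm{OPT}$ on segment $s$, $p_j$ is a reflection point if both of its incident legs lie in the half-plane $x\le x(s)$ or both lie in $x\ge x(s)$. Shadow: for a collection of legs and $x_0$, the shadow at $x_0$ is the number of legs intersecting the vertical line $x=x_0$; the shadow of a path over a range is the maximum of this over the range. *)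

(* Defs.v *)
From HB Require Import structures.
From mathcomp Require Import all_boot all_order all_algebra.
From mathcomp Require Import reals.
Set Implicit Arguments. Unset Strict Implicit. Unset Printing Implicit Defensive.
Import Order.TTheory GRing.Theory Num.Theory.
Local Open Scope ring_scope.

Section Defs.
Variable R : realType.
Notation pt := (R * R)%type.

Definition on_seg (a b : nat -> R) (i : nat) (q : pt) : bool :=
  (q.1 == a i) && (b i <= q.2 <= b i + 1).

Definition nxt (sigma j : nat) : nat := (j.+1 %% sigma)%N.
Definition prv (sigma j : nat) : nat := ((j + sigma.-1) %% sigma)%N.

Definition is_tour (n : nat) (a b : nat -> R) (sigma : nat) (p : nat -> pt) : Prop :=
  (0 < sigma)%N /\
  (forall j, (j < sigma)%N -> exists2 i, (i < n)%N & on_seg a b i (p j)) /\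
  (forall i, (i < n)%N -> exists2 j, (j < sigma)%N & on_seg a b i (p j)).

Definition dist (q r : pt) : R := Num.sqrt ((q.1 - r.1) ^+ 2 + (q.2 - r.2) ^+ 2).

Definition cost (sigma : nat) (p : nat -> pt) : R :=
  \sum_(j < sigma) dist (p j) (p (nxt sigma j)).

Definition is_opt_tour (n : nat) (a b : nat -> R) (sigma : nat) (p : nat -> pt) : Prop :=
  is_tour n a b sigma p /\
  forall sigma' (p' : nat -> pt), is_tour n a b sigma' p' -> cost sigma p <= cost sigma' p'.

Definition no_vertical_legs (n : nat) (a b : nat -> R) (sigma : nat) (p : nat -> pt) : Prop :=
  forall j i, (j < sigma)%N -> (i < n)%N ->
    ~~ (on_seg a b i (p j) && on_seg a b i (p (nxt sigma j))).

Definition legs_cross (q1 q2 r1 r2 : pt) : Prop :=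
  exists t u : R, [/\ 0 < t < 1, 0 < u < 1,
    q1.1 + t * (q2.1 - q1.1) = r1.1 + u * (r2.1 - r1.1),
    q1.2 + t * (q2.2 - q1.2) = r1.2 + u * (r2.2 - r1.2) &
    (q2.1 - q1.1) * (r2.2 - r1.2) - (q2.2 - q1.2) * (r2.1 - r1.1) != 0].

Definition not_self_crossing (sigma : nat) (p : nat -> pt) : Prop :=
  forall j k, (j < sigma)%N -> (k < sigma)%N -> j != k ->
    ~ legs_cross (p j) (p (nxt sigma j)) (p k) (p (nxt sigma k)).

Definition is_reflection (n : nat) (a b : nat -> R) (sigma : nat) (p : nat -> pt)
    (j : nat) : Prop :=
  exists2 i, (i < n)%N & on_seg a b i (p j) /\
    (((p (prv sigma j)).1 <= a i /\ (p (nxt sigma j)).1 <= a i) \/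
     (a i <= (p (prv sigma j)).1 /\ a i <= (p (nxt sigma j)).1)).

Definition leg_hits (x0 : R) (q r : pt) : bool :=
  (Num.min q.1 r.1 <= x0) && (x0 <= Num.max q.1 r.1).

Definition shadow (sigma : nat) (p : nat -> pt) (js : seq nat) (x0 : R) : nat :=
  count (fun j => leg_hits x0 (p j) (p (nxt sigma j))) js.

(* legs of the subpath p_i, p_{i+1}, ..., p_{i+m} (indices mod sigma) *)
Definition subpath_legs (sigma i m : nat) : seq nat :=
  [seq ((i + k) %% sigma)%N | k <- iota 0 m].

End Defs.

(* Main.v *)
Require Import Defs.
From HB Require Import structures.
From mathcomp Require Import all_boot all_order all_algebra.
From mathcomp Require Import reals.
From mathcomp Require Import lra zify.
Import Order.TTheory GRing.Theory Num.Theory.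
Local Open Scope ring_scope.

Section Aux.
Context {R : realType}.

Lemma prv_nxt s k : (k < s)%N -> prv s (nxt s k) = k.
Proof.
move=> ks; rewrite /prv /nxt modnDml.
have -> : (k.+1 + s.-1 = k + s)%N by lia.
by rewrite modnDr modn_small.
Qed.

Lemma nxt_prv s j : (j < s)%N -> nxt s (prv s j) = j.
Proof.
move=> js; rewrite /prv /nxt -addn1 modnDml.
have -> : (j + s.-1 + 1 = j + s)%N by lia.
by rewrite modnDr modn_small.
Qed.

Lemma sum_rot s (G : nat -> R) : \sum_(k < s) G (nxt s k) = \sum_(k < s) G k.
Proof.
rewrite [RHS](reindex_inj (@ordS_inj s)) /=.
by apply: eq_bigr.
Qed.

Lemma count_iota_sum (A : pred nat) s :
  (count A (iota 0 s))%:R = \sum_(k < s) ((A k)%:R : R).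
Proof.
elim: s => [|s IH]; first by rewrite big_ord0.
have -> : iota 0 s.+1 = iota 0 s ++ [:: s] by rewrite -addn1 iotaD.
by rewrite big_ord_recr /= count_cat /= natrD IH addn0.
Qed.

Lemma hits_xor x (P Q : R * R) : x != P.1 -> x != Q.1 ->
  leg_hits x P Q = ((P.1 < x) != (Q.1 < x)).
Proof.
move=> hP hQ; rewrite /leg_hits ge_min le_max.
move: hP hQ; set u := P.1; set v := Q.1 => hP hQ.
case: (ltgtP u x) hP => hu // _; case: (ltgtP v x) hQ => hv // _ /=;
  rewrite ?(ltW hu) ?(ltW hv) ?(lt_geF hu) ?(lt_geF hv) //.
Qed.

Lemma hits_xor' x (P Q : R * R) : x != P.1 -> x != Q.1 ->
  leg_hits x P Q = ((x < P.1) != (x < Q.1)).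
Proof.
move=> hP hQ; rewrite hits_xor //.
move: hP hQ; set u := P.1; set v := Q.1 => hP hQ.
by case: (ltgtP u x) hP => hu // _; case: (ltgtP v x) hQ => hv // _.
Qed.

Lemma count_change (b : nat -> bool) m :
  (forall k, (k < m)%N -> b k.+1 -> b k) -> b 0%N -> ~~ b m ->
  count (fun k => b k != b k.+1) (iota 0 m) = 1%N.
Proof.
elim: m => [|m IH] hm b0 bm; first by rewrite b0 in bm.
rewrite -addn1 iotaD count_cat /= add0n addn0.
case bmm: (b m).
- have allb : forall k, (k <= m)%N -> b k.
    move=> k km; elim: m {IH bm} hm km bmm => [|m' IH'] hm km bmm.
      by move: km; rewrite leqn0 => /eqP->.
    case: (ltngtP k m'.+1) km => // [kl _|-> _]; last by [].
    apply: IH' => //; first by move=> l lm; apply: hm; lia.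
    by apply: (hm m') => //; lia.
  rewrite (eq_in_count (a2 := pred0)) ?count_pred0.
    by rewrite (negbTE bm).
  move=> k; rewrite mem_iota => /andP[_ km] /=.
  by rewrite allb ?allb //; lia.
- have bm1 : b m.+1 = false.
    by apply/negbTE/negP => /(hm m (ltnSn m)); rewrite bmm.
  rewrite bm1 IH //; first by move=> k km; apply: hm; lia.
  by rewrite bmm.
Qed.


Lemma nonrefl_dir n a b s (p : nat -> R * R) j :
  is_tour n a b s p -> (j < s)%N -> ~ is_reflection n a b s p j ->
  ((p (prv s j)).1 < (p j).1 < (p (nxt s j)).1) \/
  ((p (nxt s j)).1 < (p j).1 < (p (prv s j)).1).
Proof.
move=> [_ [Hseg _]] js Hnr.
have [i ilt ons] := Hseg j js.
have /andP[/eqP ej _] := ons.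
rewrite ej.
have H1 : ~ ((p (prv s j)).1 <= a i /\ (p (nxt s j)).1 <= a i).
  by move=> h; apply: Hnr; exists i => //; split => //; left.
have H2 : ~ (a i <= (p (prv s j)).1 /\ a i <= (p (nxt s j)).1).
  by move=> h; apply: Hnr; exists i => //; split => //; right.
move: H1 H2; set u := (p (prv s j)).1; set v := (p (nxt s j)).1 => H1 H2.
case: (ltgtP u (a i)) => hu; case: (ltgtP v (a i)) => hv;
 first [ by left; apply/andP; split
       | by right; apply/andP; split
       | by exfalso; apply: H1; split; lra
       | by exfalso; apply: H2; split; lra ].
Qed.

Lemma leg_id (u v x0 x1 : R) : x0 < x1 -> x0 != u -> x0 != v -> x1 != u -> x1 != v ->
  (((u < x1) != (v < x1)) : nat)%:R - (((u < x0) != (v < x0)) : nat)%:R =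
  (if u < v then 1 else -1) *
  ((((x0 < u) && (u < x1)) : nat)%:R - (((x0 < v) && (v < x1)) : nat)%:R :> R).
Proof.
move=> x01 h1 h2 h3 h4.
case: (ltgtP u x0) h1 => hu1 // _; case: (ltgtP u x1) h3 => hu2 // _;
case: (ltgtP v x0) h2 => hv1 // _; case: (ltgtP v x1) h4 => hv2 // _;
case: (ltgtP u v) => huv /=; rewrite ?mulr1n ?mulr0n; try lra.
Qed.


Lemma mono_le (q : nat -> R) m : (forall k, (k < m)%N -> q k < q k.+1) ->
  forall k l, (k <= l)%N -> (l <= m)%N -> q k <= q l.
Proof.
move=> h k; elim=> [|l IH] kl lm.
  by move: kl; rewrite leqn0 => /eqP->.
case: (ltngtP k l.+1) kl => // [kl' _|-> _]; last done.
apply: le_trans (IH _ _) (ltW (h l _)); lia.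
Qed.

Lemma nxtS s i k : nxt s ((i + k) %% s) = ((i + k.+1) %% s)%N.
Proof.
rewrite /nxt -addn1 modnDml.
by have -> : (i + k.+1 = i + k + 1)%N by lia.
Qed.

Lemma prvS s i k : (0 < s)%N -> (0 < k)%N -> prv s ((i + k) %% s) = ((i + k.-1) %% s)%N.
Proof.
move=> s0 k0; rewrite /prv modnDml.
have -> : (i + k + s.-1 = i + k.-1 + s)%N by lia.
by rewrite modnDr.
Qed.

End Aux.
Arguments nonrefl_dir {R n a b s p j}.
Arguments mono_le {R q m}.

Theorem lemma3 (R : realType) (n : nat) (a b : nat -> R) (sigma : nat)
    (p : nat -> (R * R)%type) :
  (forall i k, (i < n)%N -> (k < n)%N -> i != k -> a i != a k) ->
  is_opt_tour n a b sigma p ->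
  no_vertical_legs n a b sigma p ->
  not_self_crossing sigma p ->
  (forall x0 x1 : R, x0 < x1 ->
     (forall j, (j < sigma)%N -> x0 != (p j).1) ->
     (forall j, (j < sigma)%N -> x1 != (p j).1) ->
     (forall j, (j < sigma)%N -> is_reflection n a b sigma p j ->
        ~ (x0 < (p j).1 < x1)) ->
     shadow sigma p (iota 0 sigma) x0 = shadow sigma p (iota 0 sigma) x1) /\
  (forall i m, (i < sigma)%N -> (0 < m <= sigma)%N ->
     (forall k, (0 < k < m)%N -> ~ is_reflection n a b sigma p ((i + k) %% sigma)%N) ->
     forall x0 : R,
       (exists2 k, (k <= m)%N & (p ((i + k) %% sigma)%N).1 < x0) ->
       (exists2 k, (k <= m)%N & x0 < (p ((i + k) %% sigma)%N).1) ->
       (forall k, (k <= m)%N -> x0 != (p ((i + k) %% sigma)%N).1) ->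
       shadow sigma p (subpath_legs sigma i m) x0 = 1%N).
Proof.
move=> Hdist Hopt Hnv Hnsc.
have Ht := Hopt.1.
have s0 : (0 < sigma)%N by case: Ht.
have nxtlt : forall k, (nxt sigma k < sigma)%N by move=> k; rewrite /nxt ltn_pmod.
split.
- move=> x0 x1 x01 h0 h1 hr.
  pose e := fun k => (if (p k).1 < (p (nxt sigma k)).1 then 1 else -1 : R).
  pose mm := fun j => ((((x0 < (p j).1) && ((p j).1 < x1)) : nat)%:R : R).
  apply/eqP; rewrite eq_sym -(eqr_nat R) /shadow !count_iota_sum -subr_eq0 -sumrB.
  rewrite (eq_bigr (fun k : 'I_sigma => e k * (mm k - mm (nxt sigma k)))); last first.
    move=> k _; have hk := ltn_ord k; have hn := nxtlt k.
    rewrite (hits_xor _ _ _ (h1 _ hk) (h1 _ hn)) (hits_xor _ _ _ (h0 _ hk) (h0 _ hn)).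
    by apply: leg_id => //; [exact: h0 | exact: h0 | exact: h1 | exact: h1].
  apply/eqP.
  under eq_bigr do rewrite mulrBr.
  rewrite sumrB.
  have -> : \sum_(k < sigma) e k * mm (nxt sigma k) =
            \sum_(k < sigma) e (prv sigma k) * mm k.
    rewrite -(sum_rot sigma (fun k => e (prv sigma k) * mm k)).
    by apply: eq_bigr => k _; rewrite prv_nxt.
  rewrite -sumrB big1 // => k _.
  rewrite -mulrBl /mm.
  case hk: (x0 < _ < _); last by rewrite mulr0.
  have hnr : ~ is_reflection n a b sigma p k.
    by move=> hrefl; apply: (hr k (ltn_ord k) hrefl); rewrite hk.
  case: (nonrefl_dir Ht (ltn_ord k) hnr) => /andP[a1 a2].
    by rewrite /e nxt_prv // a1 a2 subrr mul0r.
  by rewrite /e nxt_prv // (lt_gtF a1) (lt_gtF a2) subrr mul0r.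
- move=> i m ilt /andP[m0 ms] hnr x0 [kl hkl xl] [kr hkr xr] hne.
  pose q := fun k => (p ((i + k) %% sigma)%N).1.
  have {}xl : q kl < x0 := xl.
  have {}xr : x0 < q kr := xr.
  have interior : forall k, (0 < k < m)%N ->
      (q k.-1 < q k < q k.+1) \/ (q k.+1 < q k < q k.-1).
    move=> k /andP[k0 km].
    have := nonrefl_dir Ht (ltn_pmod (i + k)%N s0) (hnr k _).
    rewrite prvS // nxtS; apply; lia.
  rewrite /shadow /subpath_legs count_map.
  have Hx : forall k, (k < m)%N -> x0 != q k /\ x0 != q k.+1.
    by move=> k km; split; apply: hne; lia.
  have inc_case : (forall k, (k < m)%N -> q k < q k.+1) ->
      count (preim (fun k => ((i + k) %% sigma)%N)
        (fun j => leg_hits x0 (p j) (p (nxt sigma j)))) (iota 0 m) = 1%N.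
    move=> inc.
    rewrite (eq_in_count (a2 := fun k => (q k < x0) != (q k.+1 < x0))); last first.
      move=> k; rewrite mem_iota => /andP[_ km] /=.
      have [hx1 hx2] := Hx k km.
      by rewrite nxtS hits_xor.
    apply: count_change.
    + by move=> k km /= hq; have := inc k km; lra.
    + by have := mono_le inc 0%N kl (leq0n kl) hkl; lra.
    + by have := mono_le inc kr m hkr (leqnn m); rewrite /= -leNgt; lra.
  have dec_case : (forall k, (k < m)%N -> q k.+1 < q k) ->
      count (preim (fun k => ((i + k) %% sigma)%N)
        (fun j => leg_hits x0 (p j) (p (nxt sigma j)))) (iota 0 m) = 1%N.
    move=> dec.
    have inc' : forall k, (k < m)%N -> - q k < - q k.+1.
      by move=> k km; rewrite ltrN2; apply: dec.
    rewrite (eq_in_count (a2 := fun k => (x0 < q k) != (x0 < q k.+1))); last first.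
      move=> k; rewrite mem_iota => /andP[_ km] /=.
      have [hx1 hx2] := Hx k km.
      by rewrite nxtS hits_xor'.
    apply: count_change.
    + by move=> k km /= hq; have := dec k km; lra.
    + by have := mono_le inc' 0%N kr (leq0n kr) hkr; lra.
    + by have := mono_le inc' kl m hkl (leqnn m); rewrite /= -leNgt; lra.
  case: (ltgtP (q 0%N) (q 1%N)) => h01.
  + apply: inc_case; elim=> [//|k IH] km.
    case: (interior k.+1 _); first lia.
      by move=> /andP[].
    move=> /andP[_ c]; have := IH (ltnW km); rewrite /=; lra.
  + apply: dec_case; elim=> [//|k IH] km.
    case: (interior k.+1 _); first lia.
      move=> /andP[c _]; have := IH (ltnW km); rewrite /=; lra.
    by move=> /andP[].
  + exfalso; case: (ltngtP m 1) => hm.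
    * lia.
    * have := interior 1%N _; rewrite /= h01 ltxx andbF; case => //; lia.
    * subst m.
      case: kl hkl xl => [|[|kl]] // _ xl; case: kr hkr xr => [|[|kr]] // _ xr; by have := lt_trans xl xr; rewrite ?h01 ltxx.
Qed.
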